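(* For an ADP problem $\langle\mathcal{P},\mathcal{S}\rangle$ let \[\mathcal{P}'=\mathcal{U}(\mathcal{P})\cup\{\ell\to\mu^{\mathsf{false}}\mid \ell\to\mu^m\in\mathcal{P}\setminus\mathcal{U}(\mathcal{P})\},\qquad \mathcal{S}'=(\mathcal{S}\cap\mathcal{U}(\mathcal{P}))\cup\{\ell\to\mu^{\mathsf{false}}\mid\ell\to\mu^m\in\mathcal{S}\setminus\mathcal{U}(\mathcal{P})\}.\] Then the processor $\mathrm{Proc}_{\mathtt{UR}}(\langle\mathcal{P},\mathcal{S}\rangle)=(\mathrm{Pol}_0,\{\langle\mathcal{P}',\mathcal{S}'\rangle\})$ is sound.
   Context: Annotated dependency pairs (ADPs): over a finite signature $\Sigma$ with fresh annotated copies $f^\sharp$ of symbols, an ADP is $\ell\to\{p_1:r_1,\dots,p_k:r_k\}^m$ with $\ell$ a non-variable unannotated term, $r_j$ possibly annotated with $\mathcal{V}(r_j)\subseteq\mathcal{V}(\ell)$, $0<p_j\le1$, $\sum p_j=1$, flag $m\in\{\mathsf{true},\mathsf{false}\}$; $\operatorname{Supp}(\{p_j:r_j\})$ is the multiset of the $r_j$. For a set $\mathcal{P}$, defined symbols are roots of left-hand sides; basic terms are $f(t_1,\dots,t_k)$ with $f$ defined, $t_i$ free of defined symbols; $|t|$ term size; $\flat$ removes all annotations, $t^\sharp$ annotates the root, $\flat^\uparrow_\pi$ removes annotations strictly above $\pi$; $t\trianglelefteq_\sharp s$ means $t=\flat(s|_\pi)$ for some position $\pi$ of $s$ carrying an annotated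 symbol. Rewriting with $\mathcal{P}$ (innermost): at a position $\pi$ with defined or annotated symbol, ADP $\ell\to\{p_j:r_j\}^m\in\mathcal{P}$, $\sigma$ with $\flat(s|_\pi)=\ell\sigma$ whose proper subterms are normal forms: $t_j=s[r_j\sigma]_\pi$ (at: $m=\mathsf{true}$, $\pi$ annotated), $s[\flat(r_j)\sigma]_\pi$ (nt), $\flat^\uparrow_\pi(s[r_j\sigma]_\pi)$ (af), $\flat^\uparrow_\pi(s[\flat(r_j)\sigma]_\pi)$ (nf). $\mathcal{P}$-chain trees: possibly infinite finitely-branching trees with nodes $(p_v:t_v)$, root probability 1, $t_v$ rewriting to $\{\tfrac{p_w}{p_v}:t_w\}_{w}$ at inner nodes. For $\mathcal{S}\subseteq\mathcal{P}$: $\operatorname{edl}_{\langle\mathcal{P},\mathcal{S}\rangle}(\mathfrak{T})$ sums $p_v$ over inner nodes rewritten by (at)/(af)-steps with ADPs in $\mathcal{S}$; $\operatorname{edh}_{\langle\mathcal{P},\mathcal{S}\rangle}(t)$ = sup over chain trees rooted at $t^\sharp$ ($t$ basic); $\iota_{\langle\mathcal{P},\mathcal{S}\rangle}=\iota(n\mapsto\sup\{\operatorname{edh}_{\langle\mathcal{P},\mathcal{S}\rangle}(t)\mid t\text{ basic},|t|\le n\})$, where complexities $\mathfrak{C}=\{\mathrm{Pol}_0,\mathrm{Pol}_1,\dots,\mathrm{Exp},\mathrm{2\text{-}Exp},\mathrm{Fin},\omega\}$ are ordered in that order, $\oplus$ is maximum, and $\iota(f)=\mathrm{Pol}_a$ for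 least $a$ with $f\in O(n^a)$, else $\mathrm{Exp}$ if $f\in O(2^{\mathrm{pol}(n)})$, else $\mathrm{2\text{-}Exp}$ if $f\in O(2^{2^{\mathrm{pol}(n)}})$, else $\mathrm{Fin}$ if $f$ never equals $\omega$, else $\omega$. Usable rules: $\mathrm{Rules}_{\mathcal{P}}(f)=\{\ell\to\mu^{\mathsf{true}}\in\mathcal{P}\mid\operatorname{root}(\ell)=f\}$. $\mathcal{U}_{\mathcal{P}}(t)=\emptyset$ if $t$ is a variable or $\mathcal{P}=\emptyset$; $\mathcal{U}_{\mathcal{P}}(f(t_1,\dots,t_n))=\mathrm{Rules}_{\mathcal{P}}(f)\cup\bigcup_j\mathcal{U}_{\mathcal{P}'}(t_j)\cup\bigcup_{\ell\to\mu^{\mathsf{true}}\in\mathrm{Rules}_{\mathcal{P}}(f),\,r\in\operatorname{Supp}(\mu)}\mathcal{U}_{\mathcal{P}'}(\flat(r))$ with $\mathcal{P}'=\mathcal{P}\setminus\mathrm{Rules}_{\mathcal{P}}(f)$. $\mathcal{U}(\mathcal{P})=\bigcup_{\ell\to\mu^m\in\mathcal{P},\,r\in\operatorname{Supp}(\mu),\,t\trianglelefteq_\sharp r}\mathcal{U}_{\mathcal{P}}(t^\sharp)$. ADP problems, proof trees, soundness: an ADP problem is $\langle\mathcal{P},\mathcal{S}\rangle$ with $\mathcal{P}$ finite, $\mathcal{S}\subseteq\mathcal{P}$, solved iff $\mathcal{S}=\emptyset$. A processor maps an ADP problem to $(c,\{\langle\mathcal{P}_1,\mathcal{S}_1\rangle,\dots,\langle\mathcal{P}_n,\mathcal{S}_n\rangle\})$,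 $c\in\mathfrak{C}$. A proof tree is a finite tree with node labels $L_{\mathcal{A}}$ (ADP problems) and $L_{\mathcal{C}}$ (complexities) such that each inner node's labels and children arise by a processor application and leaves have $L_{\mathcal{C}}=\mathrm{Pol}_0$ if solved, $\omega$ otherwise. It is well formed if for each node $v$ with $L_{\mathcal{A}}(v)=\langle\mathcal{P},\mathcal{S}\rangle$ and root path $v_1,\dots,v_k=v$: $\iota_{\langle\mathcal{P},\mathcal{S}\rangle}\sqsubseteq L_{\mathcal{C}}(v_1)\oplus\dots\oplus L_{\mathcal{C}}(v_{k-1})\oplus\max\{L'_{\mathcal{C}}(w)\mid w$ reachable from $v$, including $v\}$ and $\iota_{\langle\mathcal{P},\mathcal{P}\setminus\mathcal{S}\rangle}\sqsubseteq L_{\mathcal{C}}(v_1)\oplus\dots\oplus L_{\mathcal{C}}(v_{k-1})$, with $L'_{\mathcal{C}}=L_{\mathcal{C}}$ on inner nodes and $\iota_{L_{\mathcal{A}}(w)}$ on leaves. A processor with $\mathrm{Proc}(\langle\mathcal{P},\mathcal{S}\rangle)=(c,\{\langle\mathcal{P}_i,\mathcal{S}_i\rangle\}_{i\le n})$ is sound if for every well-formed proof tree and node $v$ with $L_{\mathcal{A}}(v)=\langle\mathcal{P},\mathcal{S}\rangle$ and root path $v_1,\dots,v_k=v$: $\iota_{\langle\mathcal{P},\mathcal{S}\rangle}\sqsubseteq L_{\mathcal{C}}(v_1)\oplus\dots\oplus L_{\mathcal{C}}(v_{k-1})\oplus c\oplus\iota_{\langle\mathcal{P}_1,\mathcal{S}_1\rangle}\oplus\dots\oplus\iota_{\langle\mathcal{P}_n,\mathcal{S}_n\rangle}$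 and $\iota_{\langle\mathcal{P}_i,\mathcal{P}_i\setminus\mathcal{S}_i\rangle}\sqsubseteq L_{\mathcal{C}}(v_1)\oplus\dots\oplus L_{\mathcal{C}}(v_{k-1})\oplus c$ for all $i$. *)

(* Defs.v *)
From HB Require Import structures.
From mathcomp Require Import all_boot all_order all_algebra.
From mathcomp Require Import all_classical all_reals all_analysis.
From mathcomp Require Import Rstruct Rstruct_topology.
From Stdlib Require Rdefinitions.
Notation R := Rdefinitions.R.

Set Implicit Arguments.
Unset Strict Implicit.
Unset Printing Implicit Defensive.
Import Order.TTheory GRing.Theory Num.Theory.
Local Open Scope classical_set_scope.
Local Open Scope ring_scope.

Inductive cplx := Pol of nat | CExp | CExp2 | CFin | COmega.

Definition cplx_rank (c : cplx) : nat * nat :=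
  match c with
  | Pol a => (0%N, a) | CExp => (1%N, 0%N) | CExp2 => (2%N, 0%N)
  | CFin => (3%N, 0%N) | COmega => (4%N, 0%N) end.

Definition leC (c d : cplx) : Prop :=
  ((cplx_rank c).1 < (cplx_rank d).1)%N \/
  ((cplx_rank c).1 = (cplx_rank d).1 /\ ((cplx_rank c).2 <= (cplx_rank d).2)%N).

Definition maxC (c d : cplx) : cplx :=
  match c, d with
  | Pol a, Pol b => Pol (maxn a b)
  | Pol _, d => d
  | c, Pol _ => c
  | CExp, d => d
  | c, CExp => c
  | CExp2, d => d
  | c, CExp2 => c
  | CFin, d => d
  | COmega, _ => COmega
  end.

Definition bigO (f : nat -> \bar R) (g : nat -> R) : Prop :=
  exists c : R, exists N : nat, forall n : nat, (N <= n)%N -> (f n <= (c * g n)%:E)%E.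

Lemma ex_asbool_pol (f : nat -> \bar R) :
  (exists a : nat, bigO f (fun n => (n%:R) ^+ a)) ->
  exists a : nat, `[< bigO f (fun n => (n%:R) ^+ a) >].
Proof. by case=> a Ha; exists a; apply/asboolP. Qed.

Definition iota_c (f : nat -> \bar R) : cplx :=
  match pselect (exists a : nat, bigO f (fun n => (n%:R) ^+ a)) with
  | left H => Pol (ex_minn (ex_asbool_pol H))
  | right _ =>
    if `[< exists k : nat, bigO f (fun n => 2 ^+ (n ^ k)) >] then CExp
    else if `[< exists k : nat, bigO f (fun n => 2 ^+ (2 ^ (n ^ k))) >] then CExp2
    else if `[< forall n, f n != +oo%E >] then CFin
    else COmega
  end.

Section ADP.
Variable F : finType.
Variable ar : F -> nat.

(* [Fn f b ts] is f(ts) if b = false, and the annotated f^#(ts) if b = true;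
   variables are natural numbers. *)
Inductive term := Var of nat | Fn of F & bool & seq term.

Fixpoint wf_term (t : term) : bool :=
  match t with
  | Var _ => true
  | Fn f _ ts => (size ts == ar f) && all wf_term ts
  end.

Fixpoint flat (t : term) : term :=
  match t with Var x => Var x | Fn f _ ts => Fn f false (map flat ts) end.

Definition sharp (t : term) : term :=
  match t with Var x => Var x | Fn f _ ts => Fn f true ts end.

Fixpoint tsize (t : term) : nat :=
  match t with Var _ => 1%N | Fn f _ ts => (sumn (map tsize ts)).+1 end.

Fixpoint tvars (t : term) : seq nat :=
  match t with Var x => [:: x] | Fn f _ ts => flatten (map tvars ts) end.

Fixpoint subst (sigma : nat -> term) (t : term) : term :=
  match t with Var x => sigma x | Fn f b ts => Fn f b (map (subst sigma) ts) end.

Fixpoint has_annot (t : term) : bool :=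
  match t with Var _ => false | Fn f b ts => b || has has_annot ts end.

(* subterm at a position (positions are sequences of 0-based argument indices) *)
Fixpoint subterm_at (t : term) (pi : seq nat) : option term :=
  match pi with
  | [::] => Some t
  | i :: pi' => match t with
                | Var _ => None
                | Fn f b ts => if (i < size ts)%N then subterm_at (nth t ts i) pi' else None
                end
  end.

Fixpoint replace (t : term) (pi : seq nat) (u : term) : term :=
  match pi with
  | [::] => u
  | i :: pi' => match t with
                | Var x => Var x
                | Fn f b ts =>
                    Fn f b [seq (if j == i then replace tj pi' u else tj)
                           | '(j, tj) <- zip (iota 0 (size ts)) ts]
                end
  end.

Fixpoint unmark_above (t : term) (pi : seq nat) : term :=
  match pi with
  | [::] => t
  | i :: pi' => match t with
                | Var x => Var x
                | Fn f _ ts =>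
                    Fn f false [seq (if j == i then unmark_above tj pi' else tj)
                               | '(j, tj) <- zip (iota 0 (size ts)) ts]
                end
  end.

Definition annot_at (t : term) (pi : seq nat) : bool :=
  match subterm_at t pi with Some (Fn _ true _) => true | _ => false end.

Definition root (t : term) : option (F * bool) :=
  match t with Var _ => None | Fn f b _ => Some (f, b) end.

Record adp := ADP { lhs : term; rhs : seq (R * term); flag : bool }.

Definition adp_wf (a : adp) : Prop :=
  [/\ (exists f ts, lhs a = Fn f false ts),
      ~~ has_annot (lhs a), wf_term (lhs a),
      (forall p r, List.In (p, r) (rhs a) ->
         [/\ 0 < p, p <= 1, wf_term r & {subset tvars r <= tvars (lhs a)}])
    & \sum_(pr <- rhs a) pr.1 = 1].

Definition setflag (a : adp) (m : bool) : adp := ADP (lhs a) (rhs a) m.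

Definition problem := (set adp * set adp)%type.

Definition problem_ok (A : problem) : Prop :=
  [/\ finite_set A.1, A.2 `<=` A.1 & forall a, A.1 a -> adp_wf a].

Definition defined (P : set adp) (f : F) : Prop :=
  exists a, P a /\ exists b ts, lhs a = Fn f b ts.

Fixpoint no_defined (P : set adp) (t : term) : Prop :=
  match t with
  | Var _ => True
  | Fn f _ ts => ~ defined P f /\ foldr (fun u acc => no_defined P u /\ acc) True ts
  end.

Definition basic (P : set adp) (t : term) : Prop :=
  wf_term t /\ ~~ has_annot t /\
  exists f ts, t = Fn f false ts /\ defined P f /\ forall u, List.In u ts -> no_defined P u.

Definition NF (P : set adp) (u : term) : Prop :=
  forall pi v, subterm_at u pi = Some v ->
    ~ exists a sigma, P a /\ flat v = subst sigma (lhs a).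

Record step := Step { st_pos : seq nat; st_adp : adp; st_sub : nat -> term }.

Definition step_ok (P : set adp) (s : term) (st : step) : Prop :=
  P (st_adp st) /\
  exists v, subterm_at s (st_pos st) = Some v /\
    flat v = subst (st_sub st) (lhs (st_adp st)) /\
    (forall pi w, pi != [::] ->
       subterm_at (subst (st_sub st) (lhs (st_adp st))) pi = Some w -> NF P w).

Definition step_term (s : term) (st : step) (r : term) : term :=
  let pi := st_pos st in
  let r' := if annot_at s pi then r else flat r in
  let t := replace s pi (subst (st_sub st) r') in
  if flag (st_adp st) then t else unmark_above t pi.

Definition step_result (s : term) (st : step) : seq (R * term) :=
  [seq (pr.1, step_term s st pr.2) | pr <- rhs (st_adp st)].

(* P-chain trees; nodes are addressed by sequences of child indices   *)
Record ctree := CTree {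
  ct_node : set (seq nat);
  ct_prob : seq nat -> R;
  ct_lab  : seq nat -> term;
  ct_step : seq nat -> option step  (* None: leaf; Some st: inner node rewritten by st *)
}.

Definition chain_tree (P : set adp) (T : ctree) : Prop :=
  [/\ ct_node T [::], ct_prob T [::] = 1,
      (forall v i, ct_node T (rcons v i) -> ct_node T v)
    & forall v, ct_node T v ->
       match ct_step T v with
       | None => forall i, ~ ct_node T (rcons v i)
       | Some st =>
           step_ok P (ct_lab T v) st /\
           let res := step_result (ct_lab T v) st in
           (forall i, ct_node T (rcons v i) <-> (i < size res)%N) /\
           (forall i, (i < size res)%N ->
              ct_prob T (rcons v i) = ct_prob T v * (nth (0, ct_lab T v) res i).1 /\
              ct_lab T (rcons v i) = (nth (0, ct_lab T v) res i).2)
       end].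

(* inner nodes rewritten by an (at)- or (af)-step with an ADP of S *)
Definition counted (S : set adp) (T : ctree) : set (seq nat) :=
  [set v | ct_node T v /\ exists st, ct_step T v = Some st /\
           S (st_adp st) /\ annot_at (ct_lab T v) (st_pos st)].

Definition edl (S : set adp) (T : ctree) : \bar R :=
  (\esum_(v in counted S T) (ct_prob T v)%:E)%E.

Definition edh (P S : set adp) (t : term) : \bar R :=
  ereal_sup [set edl S T | T in [set T | chain_tree P T /\ ct_lab T [::] = sharp t]].

Definition iotaPS (P S : set adp) : cplx :=
  iota_c (fun n => ereal_sup [set edh P S t | t in [set t | basic P t /\ (tsize t <= n)%N]]).

Definition iotaP (A : problem) : cplx := iotaPS A.1 A.2.

Definition Rules (P : set adp) (g : F * bool) : set adp :=
  [set a | P a /\ flag a = true /\ root (lhs a) = Some g].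

Inductive inU : set adp -> term -> adp -> Prop :=
| inU_rules P f b ts a : Rules P (f, b) a -> inU P (Fn f b ts) a
| inU_arg P f b ts u a : List.In u ts -> inU (P `\` Rules P (f, b)) u a -> inU P (Fn f b ts) a
| inU_rhs P f b ts rho p r a : Rules P (f, b) rho -> List.In (p, r) (rhs rho) ->
    inU (P `\` Rules P (f, b)) (flat r) a -> inU P (Fn f b ts) a.

Definition UR (P : set adp) : set adp :=
  [set a | exists rho p r pi f ts, P rho /\ List.In (p, r) (rhs rho) /\
      subterm_at r pi = Some (Fn f true ts) /\ inU P (sharp (flat (Fn f true ts))) a].

Definition ProcUR (A : problem) : cplx * seq problem :=
  let P := A.1 in let S := A.2 in
  let P' := UR P `|` [set setflag a false | a in P `\` UR P] in
  let S' := (S `&` UR P) `|` [set setflag a false | a in S `\` UR P] in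
  (Pol 0, [:: (P', S')]).

Inductive ptree := PNode of problem & cplx & seq ptree.

Fixpoint maxL' (T : ptree) : cplx :=
  match T with
  | PNode A C ch =>
      if ch is [::] then iotaP A else foldr (fun c acc => maxC (maxL' c) acc) C ch
  end.

(* labels are ADP problems; leaves are labelled Pol_0 if solved, omega otherwise.
   (The requirement that inner nodes arise from "some processor" is vacuous.) *)
Fixpoint proof_tree (T : ptree) : Prop :=
  match T with
  | PNode A C ch =>
      problem_ok A /\
      (ch = [::] -> (A.2 = set0 -> C = Pol 0) /\ (A.2 <> set0 -> C = COmega)) /\
      foldr (fun c acc => proof_tree c /\ acc) True ch
  end.

(* [pre] = L_C(v_1) ⊕ ... ⊕ L_C(v_{k-1}) for the current node v_k *)
Fixpoint well_formed_from (pre : cplx) (T : ptree) : Prop :=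
  match T with
  | PNode A C ch =>
      leC (iotaP A) (maxC pre (maxL' T)) /\
      leC (iotaPS A.1 (A.1 `\` A.2)) pre /\
      foldr (fun c acc => well_formed_from (maxC pre C) c /\ acc) True ch
  end.

Definition well_formed (T : ptree) : Prop := well_formed_from (Pol 0) T.

(* occurs pre T A : some node of T is labelled A, with the ⊕ of the
   complexities on its root path (excluding itself) equal to pre *)
Inductive occurs : cplx -> ptree -> cplx -> problem -> Prop :=
| occ_here pre A C ch : occurs pre (PNode A C ch) pre A
| occ_child pre A C ch c pre' B :
    List.In c ch -> occurs (maxC pre C) c pre' B -> occurs pre (PNode A C ch) pre' B.

Definition sound (Proc : problem -> cplx * seq problem) : Prop :=
  forall (T : ptree) (pre : cplx) (A : problem),
    proof_tree T -> well_formed T -> occurs (Pol 0) T pre A ->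
    leC (iotaP A) (maxC (maxC pre (Proc A).1) (foldr maxC (Pol 0) (map iotaP (Proc A).2))) /\
    (forall B, List.In B (Proc A).2 -> leC (iotaPS B.1 (B.1 `\` B.2)) (maxC pre (Proc A).1)).

End ADP.

(* Main.v *)
Require Import Defs.
From mathcomp Require Import all_boot all_order all_algebra.
From mathcomp Require Import all_classical all_reals all_analysis.
From mathcomp Require Import Rstruct Rstruct_topology.
From mathcomp Require Import zify.
Set Implicit Arguments. Unset Strict Implicit. Unset Printing Implicit Defensive.
Import Order.TTheory GRing.Theory Num.Theory.
Local Open Scope classical_set_scope.

Section Terms.
Variable F : finType.
Local Notation term := (Defs.term F).

Definition term_ind2 (Q : term -> Prop) (HV : forall x, Q (Var F x))
  (HF : forall f b ts, (forall u, List.In u ts -> Q u) -> Q (Fn f b ts)) : forall t, Q t :=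
  fix rec (t : term) : Q t :=
  match t with
  | Var x => HV x
  | Fn f b ts => HF f b ts ((fix aux (l : seq term) : forall u, List.In u l -> Q u :=
       match l with
       | [::] => fun u (H : List.In u [::]) => False_ind _ H
       | v :: l' => fun u H => match H with
                               | or_introl e => eq_ind v Q (rec v) u e
                               | or_intror H' => aux l' u H' end
       end) ts)
  end.

Lemma foldr_andP (Q : term -> Prop) (us : seq term) :
  foldr (fun u acc => Q u /\ acc) True us <-> (forall u, List.In u us -> Q u).
Proof.
elim: us => [|u us IH] /=; first by split.
split; first by move=> [Hu /IH H] v [<-|/H].
move=> H; split; first by apply: H; left.
by apply/IH => v Hv; apply: H; right.
Qed.

Lemma In_nth' (A : Type) (u : A) (l : seq A) :
  List.In u l -> exists j, (j < size l)%N /\ forall d, nth d l j = u.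
Proof.
elim: l => [|x l IH] //= [<-|/IH [j [Hj Hn]]]; first by exists 0%N.
by exists j.+1.
Qed.

Lemma In_nth_In (A : Type) (l : seq A) j d : (j < size l)%N -> List.In (nth d l j) l.
Proof.
elim: l j => [|x l IH] [|j] //= Hj; first by left.
by right; apply: IH.
Qed.

Lemma In_map' (A B : Type) (f : A -> B) (l : seq A) u :
  List.In u (map f l) -> exists x, List.In x l /\ u = f x.
Proof.
elim: l => [|x l IH] //= [<-|/IH [y [Hy ->]]]; first by exists x; split => //; left.
by exists y; split => //; right.
Qed.

Lemma In_map2 (A B : Type) (f : A -> B) (l : seq A) x :
  List.In x l -> List.In (f x) (map f l).
Proof. by elim: l => [|y l IH] //= [->|/IH]; [left|right]. Qed.

Lemma map_ext_In (A B : Type) (f g : A -> B) (l : seq A) :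
  (forall x, List.In x l -> f x = g x) -> map f l = map g l.
Proof.
elim: l => [|x l IH] //= H; rewrite H; last by left.
by rewrite IH // => y Hy; apply: H; right.
Qed.

Lemma subterm_at_cat (s v : term) p q :
  subterm_at s p = Some v -> subterm_at s (p ++ q) = subterm_at v q.
Proof.
elim: p s => [|i p IH] s /=; first by case=> ->.
case: s => // f b ts; case: ifP => // _; exact: IH.
Qed.

Lemma subterm_child f b (ts : seq term) j :
  (j < size ts)%N -> subterm_at (Fn f b ts) [:: j] = Some (nth (Fn f b ts) ts j).
Proof. by move=> Hj /=; rewrite Hj. Qed.

Lemma subterm_In f b (ts : seq term) u :
  List.In u ts -> exists j, subterm_at (Fn f b ts) [:: j] = Some u.
Proof.
move=> Hin; have [j [Hj Hn]] := In_nth' Hin; exists j; by rewrite subterm_child // Hn.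
Qed.

Lemma NF_sub P (s v : term) p : NF P s -> subterm_at s p = Some v -> NF P v.
Proof.
move=> H Hp pi w Hw; apply: (H (p ++ pi) w); by rewrite (subterm_at_cat _ Hp).
Qed.

Lemma NF_child P f b (ts : seq term) u : NF P (Fn f b ts) -> List.In u ts -> NF P u.
Proof. move=> H /(subterm_In f b) [j Hj]; exact: NF_sub H Hj. Qed.

Lemma NF_mono (P1 P2 : set (adp F)) u :
  (forall a, P1 a -> exists a', P2 a' /\ lhs a' = lhs a) -> NF P2 u -> NF P1 u.
Proof.
move=> H HN pi w Hw [a [sg [Pa Ha]]].
have [a' [Pa' Ha']] := H a Pa.
apply: (HN pi w Hw); exists a', sg; by rewrite Ha'.
Qed.

Definition mk (k i : nat) (G : term -> term) (ts : seq term) : seq term :=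
  [seq (if j == i then G tj else tj) | '(j, tj) <- zip (iota k (size ts)) ts].

Lemma mk_cons k i G t0 ts :
  mk k i G (t0 :: ts) = (if k == i then G t0 else t0) :: mk k.+1 i G ts.
Proof. by []. Qed.

Lemma size_mk k i G ts : size (mk k i G ts) = size ts.
Proof. by elim: ts k => [|t ts IH] k //; rewrite mk_cons /= IH. Qed.

Lemma mk_In k i G ts u d :
  List.In u (mk k i G ts) -> List.In u ts \/
    ((k <= i)%N /\ (i < k + size ts)%N /\ u = G (nth d ts (i - k))).
Proof.
elim: ts k => [|t ts IH] k //; rewrite mk_cons /=.
case: eqP => [E|Hne] [Hu|Hu].
- by right; subst i; rewrite subnn; split => //; split => //; lia.
- by case: (IH _ Hu) => [H|[H1 [H2 H3]]]; [left; right| lia].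
- by left; left.
- case: (IH _ Hu) => [H|[H1 [H2 H3]]]; first by left; right.
  right; split; first lia. split; first lia.
  have -> : (i - k = (i - k.+1).+1)%N by lia. by [].
Qed.

Lemma mk_comp k i G1 G2 ts : mk k i G2 (mk k i G1 ts) = mk k i (fun t => G2 (G1 t)) ts.
Proof.
elim: ts k => [|t ts IH] k //; rewrite !mk_cons IH.
by case: eqP.
Qed.

Lemma mk_id k i G ts : (i < k)%N -> mk k i G ts = ts.
Proof.
elim: ts k => [|t ts IH] k // Hik; rewrite mk_cons IH; last lia.
by case: eqP => // E; lia.
Qed.

Lemma mk_eq i G1 G2 ts d : (i < size ts)%N -> G1 (nth d ts i) = G2 (nth d ts i) ->
  mk 0 i G1 ts = mk 0 i G2 ts.
Proof.
have gen : forall k, (k <= i)%N -> (i < k + size ts)%N ->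
   G1 (nth d ts (i - k)) = G2 (nth d ts (i - k)) -> mk k i G1 ts = mk k i G2 ts.
  elim: ts => [|t ts IH] k // H1 H2 H3; rewrite !mk_cons.
  case: eqP => [E|E].
  - by subst; rewrite subnn /= in H3; rewrite H3 !mk_id.
  - have E2 : (i - k = (i - k.+1).+1)%N by lia.
    rewrite E2 /= in H3; rewrite (IH k.+1) //; simpl in H2; lia.
move=> Hi H; apply: gen => //; by rewrite subn0.
Qed.

End Terms.

Section Usable.
Variable F : finType.
Local Notation term := (Defs.term F).
Implicit Types (P : set (adp F)) (t r : term).

Fixpoint syms (t : term) : seq F :=
  match t with Var _ => [::] | Fn g _ us => g :: flatten (map syms us) end.

Lemma flatten_In (A : eqType) (B : Type) (f : B -> seq A) (l : seq B) u x :
  List.In u l -> x \in f u -> x \in flatten (map f l).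
Proof.
elim: l => [|y l IH] //= [->|/IH H] Hx; rewrite mem_cat ?Hx //.
by rewrite H ?orbT.
Qed.

Lemma In_flatten (A : eqType) (B : Type) (f : B -> seq A) (l : seq B) x :
  x \in flatten (map f l) -> exists u, List.In u l /\ x \in f u.
Proof.
elim: l => [|y l IH] //=; rewrite mem_cat => /orP [H|/IH [u [Hu Hx]]].
  by exists y; split => //; left.
by exists u; split => //; right.
Qed.

Lemma syms_flat t : syms (flat t) = syms t.
Proof.
elim/term_ind2: t => [x|f b ts IH] //=; congr (_ :: flatten _).
rewrite -map_comp; exact: map_ext_In.
Qed.

Lemma tvars_flat t : tvars (flat t) = tvars t.
Proof.
elim/term_ind2: t => [x|f b ts IH] //=; congr (flatten _).
rewrite -map_comp; exact: map_ext_In.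
Qed.

Lemma Rules_diff (P0 : set (adp F)) (R0 : set (adp F)) g a : Rules P0 g a -> ~ R0 a -> Rules (P0 `\` R0) g a.
Proof. by move=> [H1 [H2 H3]] H; split; [split|split]. Qed.

Lemma Rules_neq (P0 : set (adp F)) g g' a : Rules P0 g a -> g <> g' -> ~ Rules P0 g' a.
Proof. by move=> [_ [_ H1]] H [_ [_ H2]]; apply: H; rewrite H1 in H2; case: H2. Qed.

Lemma U0 t : forall (P0 : set (adp F)) g, g \in syms t -> Rules P0 (g, false) `<=` inU P0 (flat t).
Proof.
elim/term_ind2: t => [x|h b us IH] P0 g //=.
rewrite inE => /orP [/eqP ->|/In_flatten [u [Hu Hg]]] a Ha.
  exact: inU_rules.
case: (pselect (g = h)) => [E|E]; first by subst; apply: inU_rules.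
apply: (inU_arg (u := flat u)); first exact: In_map2.
apply: (IH u Hu _ g Hg); apply: Rules_diff => //.
by apply: (Rules_neq Ha) => -[].
Qed.

Lemma U1 (P0 : set (adp F)) h (us : seq term) u g : List.In u us -> g \in syms u ->
  Rules P0 (g, false) `<=` inU P0 (Fn h true (map (@flat F) us)).
Proof.
move=> Hu Hg a Ha; apply: (inU_arg (u := flat u)); first exact: In_map2.
apply: (U0 Hg); apply: Rules_diff => //; by apply: (Rules_neq Ha).
Qed.

Lemma U2 (P0 : set (adp F)) t a : inU P0 t a -> forall p r, List.In (p, r) (rhs a) ->
  forall h, h \in syms r -> Rules P0 (h, false) `<=` inU P0 t.
Proof.
elim=> {P0 t a}.
- move=> P0 f b ts a Ha p r Hr h Hh c Hc.
  case: (pselect (Rules P0 (f, b) c)) => Hcf; first exact: inU_rules.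
  apply: (@inU_rhs F P0 f b ts a p r) => //.
  apply: (U0 Hh); exact: Rules_diff.
- move=> P0 f b ts u a Hu Hin IH p r Hr h Hh c Hc.
  case: (pselect (Rules P0 (f, b) c)) => Hcf; first exact: inU_rules.
  apply: (inU_arg (u := u)) => //; apply: (IH p r Hr h Hh); exact: Rules_diff.
- move=> P0 f b ts rho p r a Hrho Hpr Hin IH p' r' Hr h Hh c Hc.
  case: (pselect (Rules P0 (f, b) c)) => Hcf; first exact: inU_rules.
  apply: (@inU_rhs F P0 f b ts rho p r) => //; apply: (IH p' r' Hr h Hh).
  exact: Rules_diff.
Qed.

Lemma inU_sub (P0 : set (adp F)) t a : inU P0 t a -> P0 a.
Proof. elim=> {P0 t a}; [by move=> ???? a [] | by move=> ?????? _ _ [] | by move=> ???????? _ _ _ []]. Qed.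

Lemma UR_sub P : UR P `<=` P.
Proof. move=> a [rho [p [r [pi [f [ts [_ [_ [_ H]]]]]]]]]; exact: inU_sub H. Qed.

Lemma U3 P rho p r h : UR P rho -> List.In (p, r) (rhs rho) -> h \in syms r ->
  Rules P (h, false) `<=` UR P.
Proof.
move=> [rho0 [p0 [r0 [pi [f [ts [H1 [H2 [H3 H4]]]]]]]]] Hr Hh c Hc.
exists rho0, p0, r0, pi, f, ts; do 3 (split => //).
exact: (U2 H4 Hr Hh).
Qed.

Variable P : set (adp F).

Fixpoint Good (ab : bool) (t : term) : Prop :=
  match t with
  | Var _ => True
  | Fn g b us => (ab -> NF P (Fn g b us) \/ Rules P (g, false) `<=` UR P) /\
                 foldr (fun u acc => Good (ab || b) u /\ acc) True us
  end.

Fixpoint RG (ab : bool) (t : term) : Prop :=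
  match t with
  | Var _ => True
  | Fn g b us => (ab -> Rules P (g, false) `<=` UR P) /\
                 foldr (fun u acc => RG (ab || b) u /\ acc) True us
  end.

Lemma Good_mono t : forall ab ab' : bool, Good ab t -> (ab' -> ab) -> Good ab' t.
Proof.
elim/term_ind2: t => [x|g b us IH] ab ab' //= [Hr Hc] Hab; split.
  by move=> /Hab /Hr.
apply/foldr_andP => u Hu; apply: (IH u Hu (ab || b)).
  exact: (proj1 (foldr_andP _ _) Hc u Hu).
by move=> /orP [/Hab ->//|->]; rewrite orbT.
Qed.

Lemma NF_Good t : forall ab, NF P t -> Good ab t.
Proof.
elim/term_ind2: t => [x|g b us IH] ab //= HN; split; first by left.
apply/foldr_andP => u Hu; apply: IH => //; exact: NF_child HN Hu.
Qed.

Lemma Good_sub p : forall ab (s v : term), Good ab s -> subterm_at s p = Some v -> Good ab v.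
Proof.
elim: p => [|i p IH] ab s v /=; first by move=> H [<-].
case: s => // g b us [_ Hc]; case: ifP => // Hi Hp.
apply: (Good_mono (ab := ab || b)); last by move=> ->.
apply: (IH _ _ _ _ Hp); apply: (proj1 (foldr_andP _ _) Hc); exact: In_nth_In.
Qed.

Lemma RG_subst (sg : nat -> term) r : forall ab, RG ab r ->
  (forall x, x \in tvars r -> NF P (sg x)) -> Good ab (subst sg r).
Proof.
elim/term_ind2: r => [x|g b us IH] ab /=.
  by move=> _ H; apply: NF_Good; apply: H; rewrite inE.
move=> [Hr Hc] Hv; split; first by move=> /Hr; right.
apply/foldr_andP => u Hu; have [u0 [Hu0 ->]] := In_map' Hu; apply: IH => //.
  exact: (proj1 (foldr_andP _ _) Hc u0 Hu0).
move=> x Hx; apply: Hv; exact: flatten_In Hu0 Hx.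
Qed.

Lemma RG_true t : forall ab, (forall g, g \in syms t -> Rules P (g, false) `<=` UR P) -> RG ab t.
Proof.
elim/term_ind2: t => [x|g b us IH] ab //= H; split.
  by move=> _; apply: H; rewrite inE eqxx.
apply/foldr_andP => u Hu; apply: IH => // h Hh; apply: H.
by rewrite inE (flatten_In Hu Hh) orbT.
Qed.

Lemma RG_flat t : RG false (flat t).
Proof.
elim/term_ind2: t => [x|g b us IH] //=; split => //.
by apply/foldr_andP => u Hu; have [u0 [Hu0 ->]] := In_map' Hu; apply: IH.
Qed.

Lemma RG_rhs rho0 p0 r : P rho0 -> List.In (p0, r) (rhs rho0) ->
  forall r0 pi, subterm_at r pi = Some r0 -> RG false r0.
Proof.
move=> Hrho Hr r0; elim/term_ind2: r0 => [x|h b us IH] pi //= Hpi; split => //.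
apply/foldr_andP => u Hu; case: b Hpi => Hpi /=.
  apply: RG_true => g Hg c Hc.
  exists rho0, p0, r, pi, h, us; do 3 (split => //).
  rewrite /sharp /=; exact: (@U1 P h us u g Hu Hg c Hc).
have [j Hj] := subterm_In h false Hu.
apply: (IH u Hu (pi ++ [:: j])); by rewrite (subterm_at_cat _ Hpi).
Qed.

End Usable.

Section Replace.
Variable F : finType.
Local Notation term := (Defs.term F).
Variable P : set (adp F).

Lemma replace_cons g b (us : seq term) i p w :
  replace (Fn g b us) (i :: p) w = Fn g b (mk 0 i (fun tj => replace tj p w) us).
Proof. by []. Qed.

Lemma unmark_cons g b (us : seq term) i p :
  unmark_above (Fn g b us) (i :: p) = Fn g false (mk 0 i (fun tj => unmark_above tj p) us).
Proof. by []. Qed.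

Lemma replace_good p : forall (s : term) ab v w, Good P ab s -> subterm_at s p = Some v ->
  ~ NF P v -> (forall c, Good P c v -> Good P c w) -> Good P ab (replace s p w).
Proof.
elim: p => [|i p IH] s ab v w; first by move=> Hs [<-] _ H; exact: H.
move=> Hs Hsub HNF Hw; case: s Hs Hsub => // g b us [Hr Hc] Hsub.
have Hsub' := Hsub; rewrite /= in Hsub'; move: Hsub'; case: ifP => // Hi Hp.
rewrite replace_cons /=; split.
  move=> /Hr [HN|HR]; last by right.
  by exfalso; apply: HNF; exact: NF_sub HN Hsub.
apply/foldr_andP => u Hu; case: (mk_In (Fn g b us) Hu) => [Hu'|[_ [_ ->]]].
  exact: (proj1 (foldr_andP _ _) Hc u Hu').
rewrite subn0; apply: (IH _ _ v) => //.
apply: (proj1 (foldr_andP _ _) Hc); exact: In_nth_In.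
Qed.

Lemma unmark_good p : forall (s : term) ab v w, Good P ab s -> subterm_at s p = Some v ->
  ~ NF P v -> Good P ab w -> Good P ab (unmark_above (replace s p w) p).
Proof.
elim: p => [|i p IH] s ab v w; first by move=> Hs [<-] _ H; exact: H.
move=> Hs Hsub HNF Hw; case: s Hs Hsub => // g b us [Hr Hc] Hsub.
have Hsub' := Hsub; rewrite /= in Hsub'; move: Hsub'; case: ifP => // Hi Hp.
rewrite replace_cons unmark_cons mk_comp /=; split.
  move=> /Hr [HN|HR]; last by right.
  by exfalso; apply: HNF; exact: NF_sub HN Hsub.
rewrite orbF.
apply/foldr_andP => u Hu; case: (mk_In (Fn g b us) Hu) => [Hu'|[_ [_ ->]]].
  apply: (Good_mono (ab := ab || b)); last by move=> ->.
  exact: (proj1 (foldr_andP _ _) Hc u Hu').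
rewrite subn0; apply: (IH _ _ v) => //.
apply: (Good_mono (ab := ab || b)); last by move=> ->.
apply: (proj1 (foldr_andP _ _) Hc); exact: In_nth_In.
Qed.

Lemma unmark_id p : forall (s : term) ab v w, Good P ab s -> subterm_at s p = Some v ->
  (forall c, Good P c v -> c = false) ->
  ab = false /\ unmark_above (replace s p w) p = replace s p w.
Proof.
elim: p => [|i p IH] s ab v w; first by move=> Hs [<-] H; split => //; exact: H.
move=> Hs Hsub Hv; case: s Hs Hsub => // g b us [Hr Hc] Hsub.
have Hsub' := Hsub; rewrite /= in Hsub'; move: Hsub'; case: ifP => // Hi Hp.
have Hch : Good P (ab || b) (nth (Fn g b us) us i).
  apply: (proj1 (foldr_andP _ _) Hc); exact: In_nth_In.
have [Hab Heq] := IH _ _ _ w Hch Hp Hv.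
move: Hab => /norP [/negbTE -> /negbTE Hb]; split => //.
rewrite replace_cons unmark_cons mk_comp Hb; congr Fn.
exact: (mk_eq (d := Fn g b us)).
Qed.

Lemma tvars_sub (t : term) x : x \in tvars t -> exists pi, subterm_at t pi = Some (Var F x).
Proof.
elim/term_ind2: t => [y|g b us IH] /=.
  by rewrite inE => /eqP ->; exists [::].
move=> /In_flatten [u [Hu Hx]]; have [pi Hpi] := IH u Hu Hx.
have [j Hj] := subterm_In g b Hu.
exists (j :: pi); by rewrite -cat1s (subterm_at_cat _ Hj).
Qed.

Lemma subterm_subst (sg : nat -> term) pi : forall (t w : term),
  subterm_at t pi = Some w -> subterm_at (subst sg t) pi = Some (subst sg w).
Proof.
elim: pi => [|i pi IH] t w /=; first by case=> ->.
case: t => // g b us /=; rewrite size_map; case: ifP => // Hi Hp.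
rewrite (nth_map (Fn g b us)) //; exact: IH.
Qed.

End Replace.

Section Step.
Variable F : finType.
Local Notation term := (Defs.term F).
Variable ar : F -> nat.
Variables P Q : set (adp F).
Hypothesis Pwf : forall a, P a -> adp_wf ar a.
Hypothesis HQ1 : forall a, Q a -> exists a0, P a0 /\ lhs a0 = lhs a /\ rhs a0 = rhs a.
Hypothesis HQ2 : forall a, Q a -> flag a = true -> P a.
Hypothesis HQ3 : forall a0, P a0 -> exists a, Q a /\ lhs a = lhs a0.

Lemma step_eq (s : term) p v sg a w : Good P false s -> subterm_at s p = Some v ->
  flat v = subst sg (lhs a) -> P a -> ~ UR P a -> flag a = true ->
  unmark_above (replace s p w) p = replace s p w.
Proof.
move=> Hs Hsub Hflat Pa nUR Hf.
have [[g [ts0 Hl]] _ _ _ _] := Pwf Pa.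
have HNF : ~ NF P v.
  by move=> HN; apply: (HN [::] v) => //; exists a, sg.
have [b [vs Hv]] : exists b vs, v = Fn g b vs.
  move: Hflat; rewrite Hl; case: v {Hsub HNF} => [x|g' b vs] //= [-> _].
  by exists b, vs.
apply: (proj2 (unmark_id w Hs Hsub _)) => -[] //; rewrite Hv => -[H _].
case: (H isT) => [HN|HR]; first by rewrite -Hv in HN.
exfalso; apply: nUR; apply: HR; split => //; split => //; by rewrite Hl.
Qed.

Lemma step_good (s : term) st pr : Good P false s -> step_ok Q s st ->
  List.In pr (rhs (st_adp st)) -> Good P false (step_term s st pr.2).
Proof.
case: st => p rho sg; case: pr => p0 r /=.
move=> Hs [HQr [v [Hsub [Hflat Hinner]]]] Hr.
have [a0 [Pa0 [El Er]]] := HQ1 HQr.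
have [[g [ts0 Hl]] _ _ Hrhs _] := Pwf Pa0.
have Hr0 : List.In (p0, r) (rhs a0) by rewrite Er.
have [_ _ _ Hvars] := Hrhs p0 r Hr0.
have HNF : ~ NF P v.
  by move=> HN; apply: (HN [::] v) => //; exists a0, sg; rewrite Hflat El.
have [b [vs Hv]] : exists b vs, v = Fn g b vs.
  move: Hflat; rewrite -El Hl; case: v {Hsub HNF} => [x|g' b vs] //= [-> _].
  by exists b, vs.
have Hsgx : forall x, x \in tvars r -> NF P (sg x).
  move=> x /Hvars Hx; have [pi Hpi] := tvars_sub Hx.
  apply: (NF_mono HQ3); apply: (Hinner pi).
    by case: pi Hpi => //; rewrite Hl.
  by rewrite -El; exact: (@subterm_subst F sg pi _ _ Hpi).
set r' := if annot_at s p then r else flat r.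
have HRG0 : RG P false r'.
  rewrite /r'; case: ifP => _; last exact: RG_flat.
  exact: (RG_rhs Pa0 Hr0 (pi := [::])).
have Hsg' : forall x, x \in tvars r' -> NF P (sg x).
  by rewrite /r'; case: ifP => _ //; rewrite tvars_flat.
rewrite /step_term /=; case Hf: (flag rho).
- apply: (replace_good Hs Hsub HNF) => -[]; last by move=> _; exact: RG_subst.
  rewrite Hv => -[H _]; case: (H isT) => [HN|HR]; first by rewrite -Hv in HN.
  have URr : UR P rho.
    apply: HR; split; first exact: HQ2.
    by split => //; rewrite -El Hl.
  apply: RG_subst => //; apply: RG_true => h.
  rewrite /r'; case: ifP => _; rewrite ?syms_flat => Hh; exact: (U3 URr Hr Hh).
- apply: (unmark_good Hs Hsub HNF); exact: RG_subst.
Qed.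

Lemma nodef_sub (u : term) pi w : no_defined Q u -> subterm_at u pi = Some w -> no_defined Q w.
Proof.
elim: pi u => [|i pi IH] u /=; first by move=> H [<-].
case: u => // g b us [_ Hc]; case: ifP => // Hi; apply: IH.
apply: (proj1 (foldr_andP _ _) Hc); exact: In_nth_In.
Qed.

Lemma nodef_NF (u : term) : no_defined Q u -> NF P u.
Proof.
move=> Hu pi w Hw [a [sg [Pa Ha]]].
have Hw' := nodef_sub Hu Hw.
have [[g [ts0 Hl]] _ _ _ _] := Pwf Pa.
move: Ha; rewrite Hl; case: w Hw Hw' => [x|g' b ws] //= _ [Hnd _] [Eg _].
apply: Hnd; have [a' [Qa' El]] := HQ3 Pa; exists a'; split => //.
by exists false, ts0; rewrite El Hl Eg.
Qed.

Lemma basic_good (t : term) : basic ar Q t -> Good P false (sharp t).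
Proof.
move=> [_ [_ [f [ts [-> [_ Hts]]]]]] /=; split => //.
apply/foldr_andP => u Hu; apply: NF_Good; apply: nodef_NF; exact: Hts.
Qed.

Lemma tree_good (T : ctree F) t : chain_tree Q T -> ct_lab T [::] = sharp t ->
  basic ar Q t -> forall v, ct_node T v -> Good P false (ct_lab T v).
Proof.
move=> [Hroot Hp1 Hpref Hstep] Hlab Hb v; elim/last_ind: v => [|v i IH] Hn.
  by rewrite Hlab; exact: basic_good.
have Hv := Hpref v i Hn.
move: (Hstep v Hv); case E: (ct_step T v) => [st|]; last by move=> H; exfalso; apply: (H i Hn).
move=> [Hok [Hchild Hres]].
have Hi : (i < size (step_result (ct_lab T v) st))%N by apply/Hchild.
have [_ ->] := Hres i Hi.
move: Hi; rewrite /step_result size_map => Hi.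
rewrite (set_nth_default ((0:R)%R, step_term (ct_lab T v) st (ct_lab T v))) ?size_map //.
rewrite (nth_map ((0:R)%R, ct_lab T v)) //=.
apply: step_good => //; first exact: IH.
exact: In_nth_In.
Qed.

End Step.

Lemma foldr_andP' (A : Type) (Q : A -> Prop) (us : seq A) :
  foldr (fun u acc => Q u /\ acc) True us <-> (forall u, List.In u us -> Q u).
Proof.
elim: us => [|u us IH] /=; first by split.
split; first by move=> [Hu /IH H] v [<-|/H].
move=> H; split; first by apply: H; left.
by apply/IH => v Hv; apply: H; right.
Qed.

Lemma leC_refl c : leC c c.
Proof. case: c => [x| | | |]; rewrite /leC /=; lia. Qed.

Lemma leC_trans a b c : leC a b -> leC b c -> leC a c.
Proof. case: a => [x| | | |]; case: b => [y| | | |]; case: c => [z| | | |]; rewrite /leC /=; lia. Qed.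

Lemma leC_maxl c d : leC c (Defs.maxC c d).
Proof. case: c => [x| | | |]; case: d => [y| | | |]; rewrite /leC /=; lia. Qed.

Lemma leC_maxr c d : leC d (Defs.maxC c d).
Proof. case: c => [x| | | |]; case: d => [y| | | |]; rewrite /leC /=; lia. Qed.

Definition chainC (b1 b2 b3 : bool) : cplx :=
  if b1 then CExp else if b2 then CExp2 else if b3 then CFin else COmega.

Lemma chain_mono (a1 a2 a3 b1 b2 b3 : bool) : (b1 -> a1) -> (b2 -> a2) -> (b3 -> a3) ->
  leC (chainC a1 a2 a3) (chainC b1 b2 b3).
Proof.
case: a1; case: a2; case: a3; case: b1; case: b2; case: b3 => /= H1 H2 H3;
  rewrite /leC /=; try lia; try (by case: (H1 isT)); try (by case: (H2 isT)); by case: (H3 isT).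
Qed.

Lemma leC_Pol_chain a b1 b2 b3 : leC (Pol a) (chainC b1 b2 b3).
Proof. by case: b1; case: b2; case: b3; rewrite /leC /=; lia. Qed.

Local Open Scope ereal_scope.

Lemma bigO_mono (f g : nat -> \bar R) h : (forall n, f n <= g n) -> Defs.bigO g h -> Defs.bigO f h.
Proof.
move=> Hfg [c [N H]]; exists c, N => n Hn; exact: le_trans (Hfg n) (H n Hn).
Qed.

Lemma iota_mono (f g : nat -> \bar R) : (forall n, f n <= g n) -> leC (iota_c f) (iota_c g).
Proof.
move=> Hfg; rewrite /iota_c.
case: pselect => [Hf|nf]; case: pselect => [Hg|ng].
- case: ex_minnP => m Pm minm; case: ex_minnP => m' Pm' minm'.
  right; split => //=; apply: minm; apply/asboolP; apply: (bigO_mono Hfg).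
  exact/asboolP.
- exact: (leC_Pol_chain _ `[< _ >] `[< _ >] `[< _ >]).
- by exfalso; apply: nf; case: Hg => a Ha; exists a; exact: (bigO_mono Hfg).
- repeat (case: asboolP => ?); rewrite /leC /=; try lia; exfalso;
  match goal with
  | H1 : ~ _, H2 : _ |- _ =>
      apply: H1; first [ by case: H2 => k Hk; exists k; exact: (bigO_mono Hfg Hk)
                       | by move=> n; apply/negP => /eqP Efn;
                            have := Hfg n; rewrite Efn leye_eq => /eqP Eg; move: (H2 n); rewrite Eg ]
  end.
Qed.

Local Close Scope ereal_scope.

Lemma occurs_wf (F : finType) (ar : F -> nat) T pre0 pre A :
  occurs pre0 T pre A -> proof_tree ar T -> well_formed_from ar pre0 T ->
  problem_ok ar A /\ leC (iotaPS ar A.1 (A.1 `\` A.2)) pre.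
Proof.
elim => {pre0 T pre A}.
  by move=> pre A C ch /= [Hok _] [_ [Hle _]].
move=> pre A C ch c pre' B Hc _ IH /= [_ [_ Hch]] [_ [_ Hwch]]; apply: IH.
  exact: (proj1 (foldr_andP' _ _) Hch c Hc).
exact: (proj1 (foldr_andP' _ _) Hwch c Hc).
Qed.

Lemma inU_flag (F : finType) (P0 : set (adp F)) t a : inU P0 t a -> flag a = true.
Proof.
elim=> {P0 t a}; [by move=> ???? a [_ []] | by [] | by []].
Qed.

Lemma UR_flag (F : finType) (P : set (adp F)) a : UR P a -> flag a = true.
Proof. move=> [rho [p [r [pi [f [ts [_ [_ [_ H]]]]]]]]]; exact: inU_flag H. Qed.

Definition mapst (F : finType) (m : adp F -> adp F) (st : step F) :=
  Step (st_pos st) (m (st_adp st)) (st_sub st).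

Definition mapT (F : finType) (T : ctree F) (m : adp F -> adp F) :=
  CTree (ct_node T) (ct_prob T) (ct_lab T) (fun v => omap (mapst m) (ct_step T v)).

Lemma ct_map (F : finType) (Q1 Q2 : set (adp F)) T m : chain_tree Q1 T ->
  (forall v st, ct_node T v -> ct_step T v = Some st -> step_ok Q1 (ct_lab T v) st ->
     step_ok Q2 (ct_lab T v) (mapst m st) /\
     step_result (ct_lab T v) (mapst m st) = step_result (ct_lab T v) st) ->
  chain_tree Q2 (mapT T m).
Proof.
move=> [H1 H2 H3 H4] Hm; split => // v Hv /=.
have := H4 v Hv; case E: (ct_step T v) => [st|] //= [Hok Hrest].
have [Hok' ->] := Hm v st Hv E Hok; by split.
Qed.

Lemma edl_mono (F : finType) (S1 S2 : set (adp F)) T m :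
  (forall a, S1 a -> S2 (m a)) -> (edl S1 T <= edl S2 (mapT T m))%E.
Proof.
move=> Hm; rewrite /edl /esum; apply: ereal_sup_le => y [A [finA subA] <-].
exists A => //; split => // x /subA [Hx [st [E [HS Ha]]]]; split => //.
by exists (mapst m st); rewrite /= E; split => //; split => //; apply: Hm.
Qed.

Lemma step_result_eq (F : finType) (s : Defs.term F) p a b sg :
  rhs a = rhs b -> (forall r, step_term s (Step p a sg) r = step_term s (Step p b sg) r) ->
  step_result s (Step p a sg) = step_result s (Step p b sg).
Proof. by move=> Er H; rewrite /step_result /= Er; apply: eq_map => pr; rewrite H. Qed.

Lemma step_term_flag (F : finType) (s : Defs.term F) p a b sg r :
  flag a = flag b -> step_term s (Step p a sg) r = step_term s (Step p b sg) r.
Proof. by rewrite /step_term /= => ->. Qed.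

Lemma step_term_unmark (F : finType) (s : Defs.term F) p a b sg r :
  flag a = true -> flag b = false ->
  (forall w, unmark_above (replace s p w) p = replace s p w) ->
  step_term s (Step p a sg) r = step_term s (Step p b sg) r.
Proof. by rewrite /step_term /= => -> -> ->. Qed.

Definition phiUR (F : finType) (P : set (adp F)) a :=
  if `[< UR P a >] then a else setflag a false.

Section Main.
Variable F : finType.
Local Notation term := (Defs.term F).
Variable ar : F -> nat.
Variables P S : set (adp F).
Hypothesis Pwf : forall a, P a -> adp_wf ar a.

Let P' := UR P `|` [set setflag a false | a in P `\` UR P].
Let S' := (S `&` UR P) `|` [set setflag a false | a in S `\` UR P].

Lemma HP'1 a : P' a -> exists a0, P a0 /\ lhs a0 = lhs a /\ rhs a0 = rhs a.
Proof.
case => [Ha|[a0 [Pa0 _] <-]]; first by exists a; split => //; exact: UR_sub.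
by exists a0.
Qed.

Lemma HP'2 a : P' a -> flag a = true -> P a.
Proof. by case => [Ha|[a0 _ <-]] //; move=> _; exact: UR_sub. Qed.

Lemma HP'3 a0 : P a0 -> exists a, P' a /\ lhs a = lhs a0.
Proof.
move=> Pa0; case: (pselect (UR P a0)) => U; first by exists a0; split => //; left.
by exists (setflag a0 false); split => //; right; exists a0.
Qed.

Lemma HP1 a : P a -> exists a0, P a0 /\ lhs a0 = lhs a /\ rhs a0 = rhs a.
Proof. by move=> Pa; exists a. Qed.

Lemma HP2 a : P a -> flag a = true -> P a.
Proof. by []. Qed.

Lemma HP3 a0 : P a0 -> exists a, P a /\ lhs a = lhs a0.
Proof. by move=> Pa; exists a0. Qed.

Lemma HP'1' a : P' a -> exists a', P a' /\ lhs a' = lhs a.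
Proof. by move=> /HP'1 [a0 [H1 [H2 _]]]; exists a0. Qed.

Lemma phi_cases a : (UR P a /\ phiUR P a = a) \/ (~ UR P a /\ phiUR P a = setflag a false).
Proof. rewrite /phiUR; case: (asboolP (UR P a)) => U; [by left | by right]. Qed.

Lemma trans1 T t : chain_tree P T -> ct_lab T [::] = sharp t -> basic ar P t ->
  exists T', chain_tree P' T' /\ ct_lab T' [::] = sharp t /\ (edl S T <= edl S' T')%E.
Proof.
move=> HT Hlab Hb.
have Hgood := tree_good Pwf HP1 HP2 HP3 HT Hlab Hb.
exists (mapT T (phiUR P)); split; last split => //.
- apply: ct_map HT _ => v [p a sg] Hv E [Pa [v0 [Hsub [Hflat Hinner]]]].
  rewrite /mapst /=.
  have [[U ->]|[U ->]] := phi_cases a.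
    split => //; split; first by left.
    exists v0; split => //; split => // pi w Hpi Hw.
    apply: (NF_mono HP'1'); exact: (Hinner pi w Hpi Hw).
  split.
    split; first by right; exists a.
    exists v0; split => //; split => // pi w Hpi Hw.
    apply: (NF_mono HP'1'); exact: (Hinner pi w Hpi Hw).
  apply: step_result_eq => // r.
  case Hf: (flag a).
    symmetry; apply: step_term_unmark => // w.
    exact: (step_eq Pwf w (Hgood v Hv) Hsub Hflat Pa U Hf).
  by apply: step_term_flag; rewrite Hf.
- apply: edl_mono => a Sa; have [[U ->]|[U ->]] := phi_cases a; first by left.
  by right; exists a.
Qed.

Lemma trans2 T t : chain_tree P' T -> ct_lab T [::] = sharp t -> basic ar P' t ->
  exists T', chain_tree P T' /\ ct_lab T' [::] = sharp t /\
    (edl (P' `\` S') T <= edl (P `\` S) T')%E.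
Proof.
move=> HT Hlab Hb.
pose Rp := fun b a => P' b ->
   [/\ P a, lhs a = lhs b, rhs a = rhs b, (UR P b -> a = b) &
     ((~ UR P b -> setflag a false = b /\ ~ UR P a) /\ (~ S' b -> ~ S a))].
have [psi Hpsi] : {psi : adp F -> adp F & forall b, Rp b (psi b)}.
  apply: (@choice _ _ Rp) => b; rewrite /Rp; case: (pselect (P' b)) => Pb; last by exists b.
  case: Pb => [Ub|[a0 [Pa0 Ua0] Eb]].
    exists b => _; split => //; first exact: UR_sub.
    by split => // nS' Sb; apply: nS'; left.
  exists a0 => _; split => //; [by rewrite -Eb | by rewrite -Eb | | ].
    by move=> Ub; exfalso; have := UR_flag Ub; rewrite -Eb.
  by split => // nS' Sa0; apply: nS'; right; exists a0.
have Hgood := tree_good Pwf HP'1 HP'2 HP'3 HT Hlab Hb.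
exists (mapT T psi); split; last split => //.
- apply: ct_map HT _ => v [p b sg] Hv E [Pb [v0 [Hsub [Hflat Hinner]]]].
  rewrite /mapst /=.
  have [Pa El Er Hu [Hnu HS]] := Hpsi b Pb.
  split.
  + split => //; exists v0; split => //; split; first by rewrite El.
    move=> pi w Hpi; rewrite El => Hw; apply: (NF_mono HP'3); exact: (Hinner pi w Hpi Hw).
  + apply: step_result_eq => // r.
    case: (pselect (UR P b)) => U; first by rewrite (Hu U).
    have [Eb nUa] := Hnu U.
    case Hf: (flag (psi b)).
      apply: step_term_unmark => //; first by rewrite -Eb.
      have Hfl : flat v0 = subst sg (lhs (psi b)) by rewrite El.
      move=> w; exact: (step_eq Pwf w (Hgood v Hv) Hsub Hfl Pa nUa Hf).
    by apply: step_term_flag; rewrite Hf -Eb.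
- apply: edl_mono => b [Pb nSb]; have [Pa _ _ _ [_ HS]] := Hpsi b Pb.
  by split => //; apply: HS.
Qed.

Lemma defined_iff f : defined P f <-> defined P' f.
Proof.
split.
  move=> [a [Pa [b [ts E]]]]; have [a' [Pa' El]] := HP'3 Pa.
  by exists a'; split => //; exists b, ts; rewrite El.
move=> [a [Pa [b [ts E]]]]; have [a' [Pa' [El _]]] := HP'1 Pa.
by exists a'; split => //; exists b, ts; rewrite El.
Qed.

Lemma nodef_iff (u : term) : no_defined P u <-> no_defined P' u.
Proof.
elim/term_ind2: u => [x|g b us IH] //=.
split => -[Hd Hc]; (split; first by rewrite ?defined_iff // -?defined_iff);
  apply/foldr_andP => u Hu; apply/IH => //; exact: (proj1 (foldr_andP _ _) Hc u Hu).
Qed.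

Lemma basic_iff (t : term) : basic ar P t <-> basic ar P' t.
Proof.
split => -[H1 [H2 [f [ts [E [Hd Hts]]]]]]; do 2 (split => //); exists f, ts; split => //.
  by split; [exact/defined_iff | move=> u /Hts /nodef_iff].
by split; [exact/defined_iff | move=> u /Hts /nodef_iff].
Qed.

Lemma iota1 : leC (iotaPS ar P S) (iotaPS ar P' S').
Proof.
apply: iota_mono => n; apply: ge_ereal_sup => y [t [Hb Hn] <-].
apply: (@le_trans _ _ (edh P' S' t)).
  apply: ge_ereal_sup => z [T [HT Hlab] <-].
  have [T' [HT' [Hlab' Hle]]] := trans1 HT Hlab Hb.
  apply: le_trans Hle _; apply: ereal_sup_ubound; by exists T'.
apply: ereal_sup_ubound; exists t => //; split => //; exact/basic_iff.
Qed.

Lemma iota2 : leC (iotaPS ar P' (P' `\` S')) (iotaPS ar P (P `\` S)).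
Proof.
apply: iota_mono => n; apply: ge_ereal_sup => y [t [Hb Hn] <-].
apply: (@le_trans _ _ (edh P (P `\` S) t)).
  apply: ge_ereal_sup => z [T [HT Hlab] <-].
  have [T' [HT' [Hlab' Hle]]] := trans2 HT Hlab Hb.
  apply: le_trans Hle _; apply: ereal_sup_ubound; by exists T'.
apply: ereal_sup_ubound; exists t => //; split => //; exact/basic_iff.
Qed.

Lemma main1 pre : leC (iotaPS ar P S) (Defs.maxC (Defs.maxC pre (Pol 0))
   (foldr Defs.maxC (Pol 0) (map (@iotaP F ar) [:: (P', S')]))).
Proof.
apply: leC_trans iota1 _.
apply: leC_trans (leC_maxl _ (Pol 0)) _; exact: leC_maxr.
Qed.

Lemma main2 pre : leC (iotaPS ar P (P `\` S)) pre -> forall B, List.In B [:: (P', S')] ->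
  leC (iotaPS ar B.1 (B.1 `\` B.2)) (Defs.maxC pre (Pol 0)).
Proof.
move=> Hle B [<-|[]].
apply: leC_trans iota2 _; apply: leC_trans Hle _; exact: leC_maxl.
Qed.

End Main.

Theorem mainTheorem5 (F : finType) (ar : F -> nat) : sound ar (@ProcUR F).
Proof.
move=> T pre A HT Hwf Hocc.
have [[_ _ Pwf] Hle] := occurs_wf Hocc HT Hwf.
case: A Pwf Hle {Hocc} => P S Pwf Hle.
split; [exact: (@main1 F ar P S Pwf pre) | exact: (@main2 F ar P S Pwf pre Hle)].
Qed.
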